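(* Let $p\ge1$, $q\ge0$, $N=p+q\ge2$, and let $W_2,\dots,W_N$ be the polynomials in $h',h_2,\dots,h_{N-1},e_{\mu\nu},f_{\mu\nu}$ defined by $$\det(iC_{p,q}-\lambda\,\mathrm{Id}_N)+\lambda\det(i(C_{p,q})_{(11)}-\lambda\,\mathrm{Id}_{N-1})=\sum_{k=2}^N W_k\lambda^{N-k}.$$ Then $\partial W_2/\partial h'=0$, and for every $3\le k\le N$, $$N(N-1)\frac{\partial W_k}{\partial h'}-(N+1-k)\Big(\prod_{\rho=1}^N g_{\rho\rho}\Big)W_{k-1}=0 .$$
   Context: $g_{\mu\mu}=1$ for $\mu\le p$, $g_{\mu\mu}=-1$ for $p<\mu\le N$; $i=\sqrt{-1}$. The variables $h',h_2,\dots,h_{N-1}$ and $e_{\mu\nu},f_{\mu\nu}$ ($1\le\mu<\nu\le N$) are independent indeterminates, with $e_{\nu\mu}:=-e_{\mu\nu}$, $f_{\nu\mu}:=f_{\mu\nu}$. For $2\le\mu\le N$, $$Y_\mu=-\Big(\prod_{\rho=1}^N g_{\rho\rho}\Big)\frac{h'}{N(N-1)}+\sum_{\nu=2}^{\mu-1}\frac{1-\nu}{N-1}g_{\nu\nu}g_{\nu+1,\nu+1}h_\nu+\sum_{\nu=\mu}^{N-1}\frac{N-\nu}{N-1}g_{\nu\nu}g_{\nu+1,\nu+1}h_\nu .$$ $C_{p,q}$ is the $N\times N$ matrix with $(C_{p,q})_{11}=0$, $(C_{p,q})_{\mu\mu}=-iY_\mu$ ($\mu\ge2$), $(C_{p,q})_{\mu\nu}=-g_{\nu\nu}(e_{\mu\nu}+if_{\mu\nu})$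 ($\mu<\nu$), $(C_{p,q})_{\mu\nu}=g_{\nu\nu}(e_{\nu\mu}-if_{\nu\mu})$ ($\mu>\nu$); $(C_{p,q})_{(11)}$ is $C_{p,q}$ with first row and column deleted. (These $W_k$ are the Casimir invariants of the contraction $K\mathfrak{su}(p-1,q)$ of $\mathfrak{su}(p,q)$ in the coordinates dual to the basis $H',H_2,\dots,H_{N-1},E_{\mu\nu},F_{\mu\nu}$.) *)

(* Defs.v *)
From HB Require Import structures.
From mathcomp Require Import all_boot all_order all_algebra all_field.
Set Implicit Arguments. Unset Strict Implicit. Unset Printing Implicit Defensive.
Import Order.TTheory GRing.Theory Num.Theory.
Local Open Scope ring_scope.

(* Conventions: indices mu, nu are 1-based natural numbers as in the paper.
   A is an arbitrary commutative algC-algebra holding the (independent)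
   values of h_2..h_{N-1}, e_{mu nu}, f_{mu nu} (only mu < nu used).
   P := {poly A} : polynomials in the indeterminate h' (= 'X).
   {poly P}     : polynomials in lambda. *)

Section KSU.
Variables (p q : nat) (A : comAlgType algC)
          (h : nat -> A) (e f : nat -> nat -> A).

Definition NN : nat := p + q.

Definition gm (mu : nat) : algC := if (mu <= p)%N then 1 else -1.

Definition gprod : algC := \prod_(1 <= rho < NN.+1) gm rho.

Definition ctP (c : algC) : {poly A} := (c%:A)%:P.

Definition Ym (mu : nat) : {poly A} :=
  ctP (- gprod / (NN * (NN - 1))%:R) * 'X
  + (\sum_(2 <= nu < mu) ((1 - nu%:R) / (NN - 1)%:R * gm nu * gm nu.+1) *: h nu
     + \sum_(mu <= nu < NN) ((NN%:R - nu%:R) / (NN - 1)%:R * gm nu * gm nu.+1) *: h nu)%:P.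

(* entries of C_{p,q}, 1-based *)
Definition Cent (mu nu : nat) : {poly A} :=
  if mu == nu then (if mu == 1%N then 0 else ctP (- 'i) * Ym mu)
  else if (mu < nu)%N then - ctP (gm nu) * ((e mu nu)%:P + ctP 'i * (f mu nu)%:P)
  else ctP (gm nu) * ((e nu mu)%:P - ctP 'i * (f nu mu)%:P).

Definition Mfull : 'M[{poly {poly A}}]_NN :=
  \matrix_(i < NN, j < NN)
    ((ctP 'i * Cent i.+1 j.+1)%:P - (i == j)%:R * 'X).

Definition Mminor : 'M[{poly {poly A}}]_(NN.-1) :=
  \matrix_(i < NN.-1, j < NN.-1)
    ((ctP 'i * Cent i.+2 j.+2)%:P - (i == j)%:R * 'X).

Definition Dpoly : {poly {poly A}} := \det Mfull + 'X * \det Mminor.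

Definition Wk (k : nat) : {poly A} := Dpoly`_(NN - k).

End KSU.

(* Main.v *)
Require Import Defs.
From HB Require Import structures.
From mathcomp Require Import all_boot all_order all_algebra all_field.
From mathcomp Require Import ring zify.
Set Implicit Arguments. Unset Strict Implicit. Unset Printing Implicit Defensive.
Import Order.TTheory GRing.Theory Num.Theory.
Local Open Scope ring_scope.

Section Gen.
Variable R : comNzRingType.
Notation T := {poly {poly R}}.

Definition dh (x : T) : T := map_poly deriv x.

Lemma dhD x y : dh (x + y) = dh x + dh y.
Proof. by apply/polyP => k; rewrite coefD !coef_map_id0 ?deriv0 // coefD derivD. Qed.
Lemma dhN x : dh (- x) = - dh x.
Proof. by apply/polyP => k; rewrite coefN !coef_map_id0 ?deriv0 // coefN derivN. Qed.
Lemma dhM x y : dh (x * y) = dh x * y + x * dh y.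
Proof.
apply/polyP => k; rewrite coefD !coef_map_id0 ?deriv0 // !coefM.
rewrite (big_morph deriv (@derivD _) (@deriv0 _)) -big_split.
by apply: eq_bigr => i _; rewrite derivM !coef_map_id0 ?deriv0.
Qed.
Lemma dhC (y : {poly R}) : dh y%:P = (y^`())%:P.
Proof. by rewrite /dh map_polyC. Qed.
Lemma dhX : dh 'X = 0.
Proof. by apply/polyP => k; rewrite coef_map_id0 ?deriv0 // coefX coef0; case: (k == 1)%N; rewrite ?derivC ?deriv0. Qed.

Variable c : {poly R}.
Definition L (x : T) : T := dh x + c%:P * x^`().

Lemma LD x y : L (x + y) = L x + L y.
Proof. by rewrite /L dhD derivD mulrDr addrACA. Qed.
Lemma LN x : L (- x) = - L x.
Proof. by rewrite /L dhN derivN mulrN opprD. Qed.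
Lemma LM x y : L (x * y) = L x * y + x * L y.
Proof. rewrite /L dhM derivM; ring. Qed.
Lemma L0 : L 0 = 0.
Proof. by rewrite /L /dh map_poly0 deriv0 mulr0 addr0. Qed.
Lemma L1 : L 1 = 0.
Proof. by rewrite /L -polyC1 dhC !derivC polyC0 mulr0 addr0. Qed.
Lemma LX : L 'X = c%:P.
Proof. by rewrite /L dhX derivX add0r mulr1. Qed.

Lemma L_sum I (r : seq I) (P : pred I) (F : I -> T) : L (\sum_(i <- r | P i) F i) = \sum_(i <- r | P i) L (F i).
Proof. by apply: (big_morph L LD L0). Qed.

Lemma L_prod0 I (r : seq I) (P : pred I) (F : I -> T) : (forall i, P i -> L (F i) = 0) ->
  L (\prod_(i <- r | P i) F i) = 0.
Proof.
move=> H; apply: (big_ind (fun x => L x = 0)) => //; first exact: L1.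
by move=> x y Hx Hy; rewrite LM Hx Hy mul0r mulr0 addr0.
Qed.

Lemma L_exp0 x k : L x = 0 -> L (x ^+ k) = 0.
Proof. by move=> Hx; elim: k => [|k IH]; rewrite ?expr0 ?L1 // exprS LM Hx IH mul0r mulr0 addr0. Qed.

Lemma L_det n (M : 'M[T]_n) : (forall i j, L (M i j) = 0) -> L (\det M) = 0.
Proof.
move=> H; rewrite /determinant L_sum big1 // => s _.
rewrite LM (@L_prod0 _ _ _ (fun i => M i (perm.fun_of_perm s i))); last by move=> i _; apply: H.
by rewrite mulr0 addr0 L_exp0 ?mul0r // LN L1 oppr0.
Qed.

Lemma L_main n (F : nat -> nat -> T) :
  (forall i j, (0 < i + j)%N -> L (F i j) = 0) -> L (F 0%N 0%N) = - c%:P ->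
  L (\det (\matrix_(i < n.+1, j < n.+1) F i j) + 'X * \det (\matrix_(i < n, j < n) F i.+1 j.+1)) = 0.
Proof.
move=> HF H0.
have Hsub : row' ord0 (col' ord0 (\matrix_(i < n.+1, j < n.+1) F i j)) = \matrix_(i < n, j < n) F i.+1 j.+1.
  by apply/matrixP => i j; rewrite !mxE !lift0.
have Hcof j : L (cofactor (\matrix_(i < n.+1, j < n.+1) F i j) ord0 j) = 0.
  rewrite /cofactor LM L_exp0 ?LN ?L1 ?oppr0 // mul0r add0r L_det ?mulr0 // => a b.
  by rewrite !mxE lift0 HF.
rewrite LD LM LX (@L_det _ (\matrix_(i < n, j < n) F i.+1 j.+1)) ?mulr0 ?addr0; last by move=> a b; rewrite !mxE HF.
rewrite (expand_det_row _ ord0) L_sum big_ord_recl big1; last first.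
  by move=> j _; rewrite LM Hcof mulr0 !mxE HF ?mul0r ?addr0.
rewrite LM Hcof mulr0 addr0 mxE H0 addr0 /cofactor /= expr0 mul1r Hsub.
by rewrite mulNr addNr.
Qed.


Lemma detN_cp n (G : nat -> nat -> {poly R}) :
  \det (\matrix_(i < n, j < n) ((G i j)%:P - (i == j)%:R * 'X)) =
  ((-1) ^+ n)%:P * char_poly (\matrix_(i < n, j < n) G i j).
Proof.
rewrite rmorphXn rmorphN1 -detZ; congr (\det _); apply/matrixP => i j.
rewrite !mxE; case: (i == j); rewrite ?mulr1n ?mulr0n ?mul1r ?mul0r; ring.
Qed.

Lemma tr_main n (G : nat -> nat -> {poly R}) : G 0%N 0%N = 0 ->
  (\det (\matrix_(i < n.+1, j < n.+1) ((G i j)%:P - (i == j)%:R * 'X))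
   + 'X * \det (\matrix_(i < n, j < n) ((G i.+1 j.+1)%:P - (i == j)%:R * 'X)))`_n = 0.
Proof.
move=> G0.
have trB : \tr (\matrix_(i < n.+1, j < n.+1) G i j) = \tr (\matrix_(i < n, j < n) G i.+1 j.+1).
  rewrite /mxtrace big_ord_recl !mxE G0 add0r; apply: eq_bigr => i _; by rewrite !mxE.
have E2 : ('X * \det (\matrix_(i < n, j < n) ((G i.+1 j.+1)%:P - (i == j)%:R * 'X)))`_n
   = (-1) ^+ n * - \tr (\matrix_(i < n, j < n) G i.+1 j.+1).
  rewrite coefXM (detN_cp n (fun i j => G i.+1 j.+1)); case: n {trB} => [|n] /=.
    by rewrite /mxtrace big_ord0 oppr0 mulr0.
  by rewrite coefCM char_poly_trace.
rewrite coefD E2 (detN_cp n.+1 G) coefCM char_poly_trace // trB /=.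
by rewrite exprS mulN1r mulNr addNr.
Qed.


Lemma LC (y : {poly R}) : L (y%:P) = (y^`())%:P.
Proof. by rewrite /L dhC derivC mulr0 addr0. Qed.

Lemma L_main' m (F : nat -> nat -> T) : (0 < m)%N ->
  (forall i j, (0 < i + j)%N -> L (F i j) = 0) -> L (F 0%N 0%N) = - c%:P ->
  L (\det (\matrix_(i < m, j < m) F i j) + 'X * \det (\matrix_(i < m.-1, j < m.-1) F i.+1 j.+1)) = 0.
Proof. by case: m => // n _; apply: L_main. Qed.

Lemma tr_main' m (G : nat -> nat -> {poly R}) : (0 < m)%N -> G 0%N 0%N = 0 ->
  (\det (\matrix_(i < m, j < m) ((G i j)%:P - (i == j)%:R * 'X))
   + 'X * \det (\matrix_(i < m.-1, j < m.-1) ((G i.+1 j.+1)%:P - (i == j)%:R * 'X)))`_m.-1 = 0.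
Proof. by case: m => // n _; apply: tr_main. Qed.

Lemma coefL (D : T) : L D = 0 -> forall k, (D`_k)^`() = - (c * (D`_k.+1 *+ k.+1)).
Proof.
move=> H k; have := congr1 (fun P : T => P`_k) H.
rewrite /L coefD coef_map_id0 ?deriv0 // coefCM coef_deriv coef0.
by move/eqP; rewrite addr_eq0 => /eqP.
Qed.

End Gen.

Section Main.
Variables (A : comAlgType algC).

Lemma ctPM (x y : algC) : ctP A x * ctP A y = ctP A (x * y).
Proof. by rewrite /ctP -polyCM -scalerAl mul1r scalerA. Qed.
Lemma ctPN (x : algC) : ctP A (- x) = - ctP A x.
Proof. by rewrite /ctP scaleNr polyCN. Qed.
Lemma ctP_nat n : ctP A n%:R = n%:R.
Proof. by rewrite /ctP scaler_nat polyCMn polyC1. Qed.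
Lemma derivctP x : (ctP A x)^`() = 0.
Proof. exact: derivC. Qed.

End Main.

Theorem proposition5 (p q : nat) (hp : (1 <= p)%N) (hN : (2 <= p + q)%N)
  (A : comAlgType algC) (h : nat -> A) (e f : nat -> nat -> A) :
  (Wk p q h e f 2)^`() = 0 /\
  (forall k : nat, (3 <= k <= p + q)%N ->
     ((p + q) * (p + q - 1))%:R * (Wk p q h e f k)^`()
     - ((p + q + 1 - k)%:R * ctP A (gprod p q)) * Wk p q h e f k.-1 = 0).
Proof.
set c := ctP A (- gprod p q / (NN p q * (NN p q - 1))%:R).
set Fm := fun i j : nat => (ctP A 'i * Cent p q h e f i.+1 j.+1)%:P - (i == j)%:R * 'X.
have NN0 : (0 < NN p q)%N by rewrite /NN (leq_trans _ hN).
have ED : Dpoly p q h e f = \det (\matrix_(i < NN p q, j < NN p q) Fm i j)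
   + 'X * \det (\matrix_(i < (NN p q).-1, j < (NN p q).-1) Fm i.+1 j.+1).
  by rewrite /Dpoly /Mfull /Mminor; congr (\det _ + _ * \det _); apply/matrixP => i j; rewrite !mxE.
have HF : forall i j, (0 < i + j)%N -> L c (Fm i j) = 0.
  move=> i j hij; rewrite /Fm /Cent; case: (eqVneq i j) => [eij|ne]; first subst j.
    have i0 : (i.+1 == 1%N) = false by move: hij; case: i.
    rewrite !eqxx i0 mul1r LD LN LX LC mulrA ctPM mulrN -expr2 sqrCi opprK.
    rewrite /ctP scale1r polyC1 mul1r /Ym derivD derivM derivC derivX mul0r add0r mulr1 derivC addr0.
    by rewrite subrr.
  rewrite eqSS (negbTE ne) mul0r subr0 LC; case: ifP => _;
  by rewrite !(derivM, derivN, derivD, derivB, derivC) !(mul0r, mulr0, add0r, addr0, oppr0, polyC0).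
have H00 : L c (Fm 0%N 0%N) = - c%:P.
  by rewrite /Fm /Cent /= mulr0 mul1r LD LN LX LC derivC polyC0 add0r.
have LD0 := @L_main' A c (NN p q) Fm NN0 HF H00; rewrite -ED in LD0.
have TR : (Dpoly p q h e f)`_(NN p q).-1 = 0.
  rewrite /Dpoly /Mfull /Mminor; apply: (@tr_main' A (NN p q) (fun i j => ctP A 'i * Cent p q h e f i.+1 j.+1)) => //; by rewrite /Cent /= mulr0.
have CL := coefL LD0.
have Nn0 : ((p + q) * (p + q - 1))%:R != 0 :> algC.
  by rewrite pnatr_eq0 -lt0n muln_gt0; apply/andP; split; lia.
have hab : ((p + q) * (p + q - 1))%:R * c = - ctP A (gprod p q).
  by rewrite /c -ctP_nat ctPM /NN mulrC divfK // ctPN.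
split.
  rewrite /Wk CL; have -> : ((NN p q - 2).+1 = (NN p q).-1)%N by rewrite /NN; lia.
  by rewrite TR mul0rn mulr0 oppr0.
move=> k /andP[k3 kN]; rewrite /Wk CL.
have -> : ((NN p q - k).+1 = NN p q - k.-1)%N by rewrite /NN; lia.
have -> : (p + q + 1 - k)%N = (NN p q - k.-1)%N by rewrite /NN; lia.
rewrite -(mulr_natr ((Dpoly p q h e f)`_ _)).
have E : forall a cc W J G' : {poly A}, a * -(cc * (W * J)) - (J * G') * W = -((a * cc + G') * (W * J)).
  by move=> *; ring.
by rewrite E hab addNr mul0r oppr0.
Qed.
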